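(* In the setting of the context, $S^2=(q|_B)^{-1}$.
   Context: $k$ is a field; $C_R(S)=\{r\in R:rs=sr\ \forall s\in S\}$. $N\subseteq M$ is a strongly separable, irreducible extension of $k$-algebras: $C_M(N)=k1$ and there are an $N$-bimodule map $E:M\to N$ and $x_1,\dots,x_n,y_1,\dots,y_n\in M$ with $\sum_iE(mx_i)y_i=m=\sum_ix_iE(y_im)$ for all $m\in M$, $E(1)\neq0$, $\sum_ix_iy_i\neq0$; normalized so that $E(1)=1$, whence $\sum_ix_iy_i=\lambda^{-1}1$ with $0\neq\lambda\in k$. Basic construction: given $S\subseteq R$, an $S$-bimodule map $E_S:R\to S$ with $E_S(1)=1$ and $r_i,s_i\in R$ with $\sum_iE_S(rr_i)s_i=r=\sum_ir_iE_S(s_ir)$ and $\sum_ir_is_i=\lambda^{-1}1$, set $R_1=R\otimes_SR$ with product $(a\otimes b)(c\otimes d)=aE_S(bc)\otimes d$, unit $\sum_ir_i\otimes s_i$, $R\subseteq R_1$ via $r\mapsto\sum_irr_i\otimes s_i$, Jones idempotent $e=1\otimes1$, $E_R:R_1\to R$, $a\otimes b\mapsto\lambda ab$; then $E_R$, $\lambda^{-1}r_i\otimes1$, $1\otimes s_i$ satisfy the same conditions with the same $\lambda$. From $(N\subseteq M,E)$ get $M_1,e_1,E_M$; from $(M\subseteq M_1,E_M)$ get $M_2,e_2,E_{M_1}$. Let $A=C_{M_1}(N)$, $B=C_{M_2}(M)$, $C=C_{M_2}(N)$. Depth 2 is assumed: $M_1$ is free as right $M$-module with basis in $A$, $M_2$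 free as right $M_1$-module with basis in $B$. Let $F=E_M\circ E_{M_1}$; on $C$ it takes values in $k1\cong k$ and is faithful. $q:C\to C$ is the Nakayama automorphism of $F$: $F(q(c)c')=F(c'c)$ for all $c,c'\in C$; it maps $B$ onto $B$. The antipode $S:B\to B$ is the linear map defined by $E_{M_1}(be_1e_2)=E_{M_1}(e_2e_1S(b))$ for all $b\in B$ (well defined since $b\mapsto E_{M_1}(e_2e_1b)$ is a linear bijection $B\to A$). *)

(* Defs.v *)
From HB Require Import structures.
From mathcomp Require Import all_boot all_order all_algebra.
Set Implicit Arguments. Unset Strict Implicit. Unset Printing Implicit Defensive.
Import GRing.Theory.
Local Open Scope ring_scope.

Definition klin (k : fieldType) (U V : lmodType k) (g : U -> V) : Prop :=
  forall (c : k) (x y : U), g (c *: x + y) = c *: g x + g y.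

Definition balanced (k : fieldType) (R : algType k) (S : R -> Prop)
    (V : lmodType k) (f : R -> R -> V) : Prop :=
  [/\ forall a, klin (f a),
      forall b, klin (fun a => f a b)
    & forall a z b, S z -> f (a * z) b = f a (z * b)].

Definition is_tensor_over (k : fieldType) (R : algType k) (S : R -> Prop)
    (T : lmodType k) (tau : R -> R -> T) : Prop :=
  balanced S tau /\
  forall (V : lmodType k) (f : R -> R -> V), balanced S f ->
    (exists g : T -> V, klin g /\ forall a b, g (tau a b) = f a b) /\
    (forall g g' : T -> V, klin g -> klin g' ->
       (forall a b, g (tau a b) = g' (tau a b)) -> forall t, g t = g' t).

Definition bc_incl (k : fieldType) (R : algType k) (R1 : algType k)
    (n : nat) (r s : 'I_n -> R) (tau : R -> R -> R1) (x : R) : R1 :=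
  \sum_(i < n) tau (x * r i) (s i).

(* Basic construction: R1 = R (x)_S R (via tau, a (x) b = tau a b) with product
   (a (x) b)(c (x) d) = a E_S(bc) (x) d, unit sum_i r_i (x) s_i, and
   E_R : R1 -> R, a (x) b |-> lam a b.  Jones idempotent is tau 1 1. *)
Definition is_basic_construction (k : fieldType) (R : algType k)
    (S : R -> Prop) (ES : R -> R) (n : nat) (r s : 'I_n -> R) (lam : k)
    (R1 : algType k) (tau : R -> R -> R1) (ER : R1 -> R) : Prop :=
  [/\ is_tensor_over S tau,
      forall a b c d, tau a b * tau c d = tau (a * ES (b * c)) d,
      1 = \sum_(i < n) tau (r i) (s i),
      klin ER
    & forall a b, ER (tau a b) = lam *: (a * b)].

Definition centralizer (k : fieldType) (R : algType k) (P : R -> Prop)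
    (x : R) : Prop := forall y, P y -> x * y = y * x.

(* Main.v *)
Require Import Defs.
From HB Require Import structures.
From mathcomp Require Import all_boot all_order all_algebra.
Set Implicit Arguments. Unset Strict Implicit. Unset Printing Implicit Defensive.
Import GRing.Theory.
Local Open Scope ring_scope.


Section Klin.
Variables (k : fieldType) (U V W : lmodType k).

Lemma klinD (g : U -> V) : klin g -> forall x y, g (x + y) = g x + g y.
Proof. by move=> H x y; rewrite -{1}[x]scale1r H scale1r. Qed.

Lemma klin0 (g : U -> V) : klin g -> g 0 = 0.
Proof.
move=> H; have h := klinD H 0 0; rewrite addr0 in h.
by apply: (addrI (g 0)); rewrite addr0 -h.
Qed.

Lemma klinZ (g : U -> V) : klin g -> forall c x, g (c *: x) = c *: g x.
Proof. by move=> H c x; rewrite -[c *: x]addr0 H klin0 // addr0. Qed.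

Lemma klinN (g : U -> V) : klin g -> forall x, g (- x) = - g x.
Proof. by move=> H x; rewrite -scaleN1r klinZ // scaleN1r. Qed.

Lemma klinB (g : U -> V) : klin g -> forall x y, g (x - y) = g x - g y.
Proof. by move=> H x y; rewrite klinD // klinN. Qed.

Lemma klin_sum (g : U -> V) (I : Type) (rr : seq I) (P : pred I) (F : I -> U) :
  klin g -> g (\sum_(i <- rr | P i) F i) = \sum_(i <- rr | P i) g (F i).
Proof. by move=> H; apply: (big_morph g (klinD H) (klin0 H)). Qed.

Lemma klin_comp (f : V -> W) (g : U -> V) : klin f -> klin g -> klin (fun x => f (g x)).
Proof. by move=> Hf Hg c x y; rewrite Hg Hf. Qed.

Lemma klin_add (f g : U -> V) : klin f -> klin g -> klin (fun x => f x + g x).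
Proof. by move=> Hf Hg c x y; rewrite Hf Hg scalerDr addrACA. Qed.

Lemma klin_sumf (m : nat) (F : 'I_m -> U -> V) :
  (forall i, klin (F i)) -> klin (fun x => \sum_(i < m) F i x).
Proof.
move=> H c x y; rewrite scaler_sumr -big_split /=; apply: eq_bigr => i _; exact: H.
Qed.

Lemma klin_scale (a : k) (f : U -> V) : klin f -> klin (fun x => a *: f x).
Proof. by move=> Hf c x y; rewrite Hf scalerDr !scalerA mulrC. Qed.

Lemma klin_id : klin (fun x : U => x).
Proof. by []. Qed.

Lemma klin_const0 : klin (fun x : U => (0 : V)).
Proof. by move=> c x y; rewrite scaler0 addr0. Qed.
End Klin.

Lemma klin_mulr (k : fieldType) (R : algType k) (a : R) : klin (fun x : R => a * x).
Proof. by move=> c u v; rewrite mulrDr scalerAr. Qed.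

Lemma klin_mull (k : fieldType) (R : algType k) (a : R) : klin (fun x : R => x * a).
Proof. by move=> c u v; rewrite mulrDl scalerAl. Qed.

Record BCH (k : fieldType) (R : algType k) (S : R -> Prop) (ES : R -> R) (n : nat)
  (r s : 'I_n -> R) (lam : k) (R1 : algType k) (tau : R -> R -> R1) (ER : R1 -> R) : Prop :=
  BCHmk {
  bS_scal : forall c : k, S (c%:A);
  bES_S : forall m, S (ES m);
  bES_add : forall u v, ES (u + v) = ES u + ES v;
  bES_l : forall u m, S u -> ES (u * m) = u * ES m;
  bES_r : forall u m, S u -> ES (m * u) = ES m * u;
  bqb1 : forall m, \sum_(i < n) ES (m * r i) * s i = m;
  bqb2 : forall m, \sum_(i < n) r i * ES (s i * m) = m;
  bES1 : ES 1 = 1;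
  blam0 : lam != 0;
  bsumrs : \sum_(i < n) r i * s i = lam^-1%:A;
  bbc : is_basic_construction S ES r s lam tau ER }.

Section Generic.
Variables (k : fieldType) (R : algType k) (S : R -> Prop) (ES : R -> R) (n : nat)
  (r s : 'I_n -> R) (lam : k) (R1 : algType k) (tau : R -> R -> R1) (ER : R1 -> R).
Hypothesis H : BCH S ES r s lam tau ER.

Local Notation iota := (bc_incl r s tau).
Local Notation e := (tau 1 1).

Lemma g_ES_klin : klin ES.
Proof.
move=> c u v; rewrite (bES_add H) -mulr_algl (bES_l H _ (bS_scal H c)).
by rewrite mulr_algl.
Qed.

Lemma g_bal : balanced S tau.
Proof. by case: (bbc H) => [[]]. Qed.

Lemma g_tauZDl b : klin (fun a => tau a b).
Proof. by case: g_bal. Qed.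

Lemma g_tauZDr a : klin (tau a).
Proof. by case: g_bal. Qed.

Lemma g_tau_bal a z b : S z -> tau (a * z) b = tau a (z * b).
Proof. by case: g_bal => _ _; apply. Qed.

Lemma g_tau_suml (I : Type) (rr : seq I) (P : pred I) (F : I -> R) b :
  tau (\sum_(i <- rr | P i) F i) b = \sum_(i <- rr | P i) tau (F i) b.
Proof. exact: (klin_sum _ _ _ (g_tauZDl b)). Qed.

Lemma g_tau_sumr (I : Type) (rr : seq I) (P : pred I) (F : I -> R) a :
  tau a (\sum_(i <- rr | P i) F i) = \sum_(i <- rr | P i) tau a (F i).
Proof. exact: (klin_sum _ _ _ (g_tauZDr a)). Qed.

Lemma g_tauZl c a b : tau (c *: a) b = c *: tau a b.
Proof. exact: (klinZ (g_tauZDl b)). Qed.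

Lemma g_tauZr c a b : tau a (c *: b) = c *: tau a b.
Proof. exact: (klinZ (g_tauZDr a)). Qed.

Lemma g_ext (V : lmodType k) (g g' : R1 -> V) : klin g -> klin g' ->
  (forall a b, g (tau a b) = g' (tau a b)) -> forall t, g t = g' t.
Proof.
move=> Hg Hg' Heq t; case: (bbc H) => [[_ Hu] _ _ _ _].
have Hb : balanced S (fun a b => g (tau a b)).
  split.
  - by move=> a; apply: klin_comp Hg (g_tauZDr a).
  - by move=> b; apply: (klin_comp Hg (g_tauZDl b)).
  - by move=> a z b Hz; rewrite g_tau_bal.
by case: (Hu V _ Hb) => _ /(_ g g' Hg Hg' Heq).
Qed.

Lemma g_mul a b c d : tau a b * tau c d = tau (a * ES (b * c)) d.
Proof. by case: (bbc H). Qed.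

Lemma g_one : 1 = \sum_(i < n) tau (r i) (s i).
Proof. by case: (bbc H). Qed.

Lemma g_ER_klin : klin ER.
Proof. by case: (bbc H). Qed.

Lemma g_ER_tau a b : ER (tau a b) = lam *: (a * b).
Proof. by case: (bbc H). Qed.

Lemma g_iota_klin : klin iota.
Proof.
rewrite /bc_incl; apply: klin_sumf => i.
exact: (klin_comp (g_tauZDl (s i)) (klin_mull (r i))).
Qed.

Lemma g_iota_tau m a b : iota m * tau a b = tau (m * a) b.
Proof.
rewrite /bc_incl mulr_suml; under eq_bigr do rewrite g_mul.
rewrite -g_tau_suml; congr tau.
under eq_bigr do rewrite -mulrA.
by rewrite -mulr_sumr (bqb2 H).
Qed.

Lemma g_tau_iota m a b : tau a b * iota m = tau a (b * m).
Proof.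
rewrite /bc_incl mulr_sumr; under eq_bigr do rewrite g_mul.
under eq_bigr do rewrite (g_tau_bal _ _ (bES_S H _)) mulrA.
by rewrite -g_tau_sumr (bqb1 H).
Qed.

Lemma g_iota1 : iota 1 = 1.
Proof. by rewrite /bc_incl; under eq_bigr do rewrite mul1r; rewrite -g_one. Qed.

Lemma g_iotaM u v : iota (u * v) = iota u * iota v.
Proof.
rewrite {3}/bc_incl mulr_sumr; under eq_bigr do rewrite g_iota_tau mulrA.
by [].
Qed.

Lemma g_iotaD u v : iota (u + v) = iota u + iota v.
Proof. exact: (klinD g_iota_klin). Qed.

Lemma g_iotaZ c u : iota (c *: u) = c *: iota u.
Proof. exact: (klinZ g_iota_klin). Qed.

Lemma g_iota_sum (I : Type) (rr : seq I) (P : pred I) (F : I -> R) :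
  iota (\sum_(i <- rr | P i) F i) = \sum_(i <- rr | P i) iota (F i).
Proof. exact: (klin_sum _ _ _ g_iota_klin). Qed.

Lemma g_tau_e a b : tau a b = iota a * e * iota b.
Proof. by rewrite g_iota_tau g_tau_iota mulr1 mul1r. Qed.

Lemma g_eiotae m : e * iota m * e = iota (ES m) * e.
Proof. by rewrite g_tau_iota g_mul g_iota_tau !mul1r !mulr1. Qed.

Lemma g_iota_e_comm z : S z -> iota z * e = e * iota z.
Proof.
move=> Hz; rewrite g_iota_tau g_tau_iota mulr1 mul1r.
by rewrite -{1}[z]mul1r g_tau_bal // mulr1.
Qed.

Lemma g_ER_iota m : ER (iota m) = m.
Proof.
rewrite /bc_incl (klin_sum _ _ _ g_ER_klin).
under eq_bigr do rewrite g_ER_tau -mulrA.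
rewrite -scaler_sumr -mulr_sumr (bsumrs H) mulr_algr scalerA mulfV ?(blam0 H) //.
by rewrite scale1r.
Qed.

Lemma g_ER_l u w : ER (iota u * w) = u * ER w.
Proof.
move: w; apply: g_ext.
- exact: (klin_comp g_ER_klin (klin_mulr _)).
- exact: (klin_comp (klin_mulr _) g_ER_klin).
by move=> a b; rewrite g_iota_tau !g_ER_tau -scalerAr mulrA.
Qed.

Lemma g_ER_r w v : ER (w * iota v) = ER w * v.
Proof.
move: w; apply: g_ext.
- exact: (klin_comp g_ER_klin (klin_mull _)).
- exact: (klin_comp (klin_mull _) g_ER_klin).
by move=> a b; rewrite g_tau_iota !g_ER_tau -scalerAl mulrA.
Qed.

Lemma g_ER1 : ER 1 = 1.
Proof. by rewrite -g_iota1 g_ER_iota. Qed.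

Lemma g_ER_e : ER e = lam%:A.
Proof. by rewrite g_ER_tau mulr1. Qed.

Lemma g_ER_iei u v : ER (iota u * e * iota v) = lam *: (u * v).
Proof. by rewrite -g_tau_e g_ER_tau. Qed.

Lemma g_qbE1 w :
  \sum_(i < n) iota (ER (w * tau (lam^-1 *: r i) 1)) * tau 1 (s i) = w.
Proof.
move: w; apply: g_ext.
- apply: klin_sumf => i.
  apply: (klin_comp (klin_mull _)); apply: (klin_comp g_iota_klin).
  exact: (klin_comp g_ER_klin (klin_mull _)).
- exact: klin_id.
move=> a b.
under eq_bigr do rewrite g_mul g_ER_tau mulr1 -scalerAr (klinZ g_ES_klin)
  -scalerAr scalerA mulfV ?(blam0 H) // scale1r g_iota_tau mulr1
  (g_tau_bal _ _ (bES_S H _)).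
by rewrite -g_tau_sumr (bqb1 H).
Qed.

Lemma g_qbE2 w :
  \sum_(i < n) tau (lam^-1 *: r i) 1 * iota (ER (tau 1 (s i) * w)) = w.
Proof.
move: w; apply: g_ext.
- apply: klin_sumf => i.
  apply: (klin_comp (klin_mulr _)); apply: (klin_comp g_iota_klin).
  exact: (klin_comp g_ER_klin (klin_mulr _)).
- exact: klin_id.
move=> a b.
under eq_bigr do rewrite g_mul g_ER_tau mul1r g_tau_iota mul1r g_tauZl g_tauZr
  scalerA mulVf ?(blam0 H) // scale1r -(g_tau_bal _ _ (bES_S H _)).
by rewrite -g_tau_suml (bqb2 H).
Qed.

Lemma g_sumrs' :
  \sum_(i < n) tau (lam^-1 *: r i) 1 * tau 1 (s i) = lam^-1%:A.
Proof.
under eq_bigr do rewrite g_mul mulr1 (bES1 H) mulr1 g_tauZl.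
by rewrite -scaler_sumr -g_one.
Qed.

Lemma g_pull X : iota (ER (X * e)) * e = lam *: (X * e).
Proof.
move: X; apply: g_ext.
- apply: (klin_comp (klin_mull _)); apply: (klin_comp g_iota_klin).
  exact: (klin_comp g_ER_klin (klin_mull _)).
- exact: (klin_scale _ (klin_mull _)).
move=> a b.
by rewrite g_mul g_ER_tau g_iotaZ -scalerAl g_iota_tau !mulr1.
Qed.

Lemma g_next (R2 : algType k) (tau' : R1 -> R1 -> R2) (ER' : R2 -> R1) :
  is_basic_construction (fun z : R1 => exists m : R, z = iota m)
    (fun z : R1 => iota (ER z)) (fun i => tau (lam^-1 *: r i) 1)
    (fun i => tau 1 (s i)) lam tau' ER' ->
  BCH (fun z : R1 => exists m : R, z = iota m)
    (fun z : R1 => iota (ER z)) (fun i => tau (lam^-1 *: r i) 1)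
    (fun i => tau 1 (s i)) lam tau' ER'.
Proof.
move=> Hbc; split => //.
- by move=> c; exists c%:A; rewrite g_iotaZ g_iota1.
- by move=> m; exists (ER m).
- by move=> u v; rewrite (klinD g_ER_klin) g_iotaD.
- by move=> _ m [u0 ->]; rewrite g_ER_l g_iotaM.
- by move=> _ m [u0 ->]; rewrite g_ER_r g_iotaM.
- exact: g_qbE1.
- exact: g_qbE2.
- by rewrite g_ER1 g_iota1.
- exact: (blam0 H).
- exact: g_sumrs'.
Qed.

End Generic.



Section Main.
Variables (k : fieldType) (M : algType k) (N : M -> Prop).
Hypothesis N1 : N 1.
Hypothesis Nlin : forall (c : k) (u v : M), N u -> N v -> N (c *: u + v).
Variable E : M -> M.
Hypothesis EN : forall m, N (E m).
Hypothesis Eadd : forall u v, E (u + v) = E u + E v.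
Hypothesis Ebil : forall u m, N u -> E (u * m) = u * E m.
Hypothesis Ebir : forall u m, N u -> E (m * u) = E m * u.
Variables (n : nat) (x y : 'I_n -> M) (lam : k).
Hypothesis qb1 : forall m, \sum_(i < n) E (m * x i) * y i = m.
Hypothesis qb2 : forall m, \sum_(i < n) x i * E (y i * m) = m.
Hypothesis E1 : E 1 = 1.
Hypothesis lam0 : lam != 0.
Hypothesis sumxy : \sum_(i < n) x i * y i = lam^-1%:A.
Variables (M1 : algType k) (tau1 : M -> M -> M1) (EM : M1 -> M).
Hypothesis bc1 : is_basic_construction N E x y lam tau1 EM.
Variables (M2 : algType k) (tau2 : M1 -> M1 -> M2) (EM1 : M2 -> M1).
Hypothesis bc2 : is_basic_construction
           (fun z : M1 => exists m : M, z = bc_incl x y tau1 m)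
           (fun z : M1 => bc_incl x y tau1 (EM z))
           (fun i => tau1 (lam^-1 *: x i) 1) (fun i => tau1 1 (y i))
           lam tau2 EM1.

Local Notation i1 := (bc_incl x y tau1).
Local Notation e1 := (tau1 1 1).
Local Notation r2 := (fun i => tau1 (lam^-1 *: x i) 1).
Local Notation s2 := (fun i => tau1 1 (y i)).
Local Notation i2 := (bc_incl (fun i => tau1 (lam^-1 *: x i) 1) (fun i => tau1 1 (y i)) tau2).
Local Notation e2 := (tau2 1 1).

Lemma N0 : N 0.
Proof. by have := Nlin (-1) N1 N1; rewrite scaleN1r addNr. Qed.

Lemma H1 : BCH N E x y lam tau1 EM.
Proof.
split => //.
by move=> c; have := Nlin c N1 N0; rewrite addr0.
Qed.

Lemma H2 : BCH (fun z : M1 => exists m : M, z = i1 m)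
           (fun z : M1 => i1 (EM z)) r2 s2 lam tau2 EM1.
Proof. exact: (g_next H1 bc2). Qed.

Definition Acen (a : M1) := forall m, N m -> a * i1 m = i1 m * a.
Definition Bc (b : M2) := centralizer (fun z : M2 => exists u : M, z = i2 (i1 u)) b.
Definition Cc (c : M2) := centralizer (fun z : M2 => exists u, N u /\ z = i2 (i1 u)) c.

Lemma AcenP a : centralizer (fun z : M1 => exists u, N u /\ z = i1 u) a <-> Acen a.
Proof.
split; first by move=> Ha m Hm; apply: Ha; exists m.
by move=> Ha _ [m [Hm ->]]; apply: Ha.
Qed.

Lemma BcP b : Bc b -> forall m, b * i2 (i1 m) = i2 (i1 m) * b.
Proof. by move=> Hb m; apply: Hb; exists m. Qed.

Lemma Bc_Cc b : Bc b -> Cc b.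
Proof. by move=> Hb _ [u [_ ->]]; apply: BcP. Qed.

Lemma j_e2 m : i2 (i1 m) * e2 = e2 * i2 (i1 m).
Proof. by apply: (g_iota_e_comm H2); exists m. Qed.

Lemma i1_e1 m : N m -> i1 m * e1 = e1 * i1 m.
Proof. exact: (g_iota_e_comm H1). Qed.

Lemma j_e1 m : N m -> i2 (i1 m) * i2 e1 = i2 e1 * i2 (i1 m).
Proof. by move=> Hm; rewrite -!(g_iotaM H2) i1_e1. Qed.

Lemma j_A a m : Acen a -> N m -> i2 (i1 m) * i2 a = i2 a * i2 (i1 m).
Proof. by move=> Ha Hm; rewrite -!(g_iotaM H2) Ha. Qed.

Lemma e2e2 w : e2 * i2 w * e2 = i2 (i1 (EM w)) * e2.
Proof. exact: (g_eiotae H2). Qed.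

Lemma e1e1 m : e1 * i1 m * e1 = i1 (E m) * e1.
Proof. exact: (g_eiotae H1). Qed.

Lemma EM1_iei u v : EM1 (i2 u * e2 * i2 v) = lam *: (u * v).
Proof. exact: (g_ER_iei H2). Qed.

Lemma EM_iei u v : EM (i1 u * e1 * i1 v) = lam *: (u * v).
Proof. exact: (g_ER_iei H1). Qed.

Lemma EM1_ie u : EM1 (i2 u * e2) = lam *: u.
Proof. by have := EM1_iei u 1; rewrite (g_iota1 H2) !mulr1. Qed.

Lemma EM_ie u : EM (i1 u * e1) = lam *: u.
Proof. by have := EM_iei u 1; rewrite (g_iota1 H1) !mulr1. Qed.

Lemma EM_e1 : EM e1 = lam%:A.
Proof. exact: (g_ER_e H1). Qed.

Lemma one1 : \sum_(i < n) i1 (x i) * e1 * i1 (y i) = 1.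
Proof.
rewrite [RHS](g_one H1); apply: eq_bigr => i _.
by rewrite [RHS](g_tau_e H1).
Qed.

Lemma EklinZ c m : E (c *: m) = c *: E m.
Proof. exact: (klinZ (g_ES_klin H1)). Qed.

Fact beta_key : unit. Proof. exact: tt. Qed.
Definition beta (b : M2) := locked_with beta_key (lam^-1 *: EM1 (b * i2 e1 * e2)).
Lemma betaE b : beta b = lam^-1 *: EM1 (b * i2 e1 * e2).
Proof. by rewrite /beta unlock. Qed.

Lemma beta_A b : Bc b -> Acen (beta b).
Proof.
move=> Hb m Hm; rewrite !betaE -scalerAl -scalerAr; congr (_ *: _).
rewrite -(g_ER_r H2) -(g_ER_l H2); congr EM1.
rewrite -mulrA -j_e2 mulrA -(mulrA b) -j_e1 // mulrA (BcP Hb) !mulrA.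
by [].
Qed.


Lemma tau2_1 w : tau2 w 1 = i2 w * e2.
Proof. by rewrite (g_tau_e H2) (g_iota1 H2) mulr1. Qed.
Lemma tau2_1' w : tau2 1 w = e2 * i2 w.
Proof. by rewrite (g_tau_e H2) (g_iota1 H2) mul1r. Qed.
Lemma tau1_1 w : tau1 w 1 = i1 w * e1.
Proof. by rewrite (g_tau_e H1) (g_iota1 H1) mulr1. Qed.
Lemma tau1_1' w : tau1 1 w = e1 * i1 w.
Proof. by rewrite (g_tau_e H1) (g_iota1 H1) mul1r. Qed.

Lemma i2M u v : i2 (u * v) = i2 u * i2 v.
Proof. exact: (g_iotaM H2). Qed.
Lemma i1M u v : i1 (u * v) = i1 u * i1 v.
Proof. exact: (g_iotaM H1). Qed.
Lemma i2Z c u : i2 (c *: u) = c *: i2 u.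
Proof. exact: (g_iotaZ H2). Qed.
Lemma i1Z c u : i1 (c *: u) = c *: i1 u.
Proof. exact: (g_iotaZ H1). Qed.
Lemma EM1Z c u : EM1 (c *: u) = c *: EM1 u.
Proof. exact: (klinZ (g_ER_klin H2)). Qed.
Lemma EMZ c u : EM (c *: u) = c *: EM u.
Proof. exact: (klinZ (g_ER_klin H1)). Qed.
Lemma EM1_l u w : EM1 (i2 u * w) = u * EM1 w.
Proof. exact: (g_ER_l H2). Qed.
Lemma EM1_r w u : EM1 (w * i2 u) = EM1 w * u.
Proof. exact: (g_ER_r H2). Qed.
Lemma EM_l u w : EM (i1 u * w) = u * EM w.
Proof. exact: (g_ER_l H1). Qed.
Lemma EM_r w u : EM (w * i1 u) = EM w * u.
Proof. exact: (g_ER_r H1). Qed.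

Definition Bform (a : M1) := lam^-1 *: \sum_(i < n)
  i2 (i1 (x i)) * i2 a * e2 * i2 e1 * i2 (i1 (y i)).

Lemma Kb b : Bc b -> b * i2 e1 = lam^-1 *: (i2 (beta b) * e2 * i2 e1).
Proof.
move=> Hb.
rewrite -[b * i2 e1](g_qbE1 H2) /=.
have term : forall i, i2 (EM1 (b * i2 e1 * tau2 (lam^-1 *: tau1 (lam^-1 *: x i) 1) 1))
   * tau2 1 (tau1 1 (y i))
   = lam^-1 *: (i2 (beta b) * e2 * i2 e1 * i2 (i1 (E (x i) * y i))).
  move=> i.
  rewrite (tau2_1 (lam^-1 *: _)) (tau2_1' (tau1 1 (y i))) (tau1_1' (y i)).
  rewrite (g_tauZl H1 _ (x i)) (tau1_1 (x i)) !i2Z.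
  rewrite -!scalerAl -!scalerAr !EM1Z !i2Z -!scalerAl; congr (_ *: _).
  have inner : b * i2 e1 * (i2 (i1 (x i) * e1) * e2) = i2 (i1 (E (x i))) * (b * i2 e1 * e2).
    by rewrite mulrA -(mulrA b) -i2M mulrA e1e1 i2M mulrA (BcP Hb) !mulrA.
  have eb : EM1 (b * i2 e1 * e2) = lam *: beta b.
    by rewrite betaE scalerA mulfV // scale1r.
  rewrite inner EM1_l eb -scalerAr i2Z -scalerAl scalerA mulVf // scale1r.
  rewrite -(beta_A Hb (EN _)) !i2M !i1M !i2M !mulrA.
  rewrite -(mulrA (i2 (beta b)) (i2 (i1 (E (x i))))) j_e2 mulrA.
  by rewrite -(mulrA _ (i2 (i1 (E (x i)))) (i2 e1)) (j_e1 (EN _)) mulrA.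
rewrite (eq_bigr _ (fun i _ => term i)) -scaler_sumr -mulr_sumr.
rewrite -(g_iota_sum H2) -(g_iota_sum H1).
have -> : \sum_(i < n) E (x i) * y i = 1.
  by rewrite -[RHS](qb1 1); apply: eq_bigr => i _; rewrite mul1r.
by rewrite (g_iota1 H1) (g_iota1 H2) mulr1.
Qed.

Lemma B_recon b : Bc b -> b = Bform (beta b).
Proof.
move=> Hb; rewrite /Bform.
have {1}-> : b = b * i2 (\sum_(i < n) i1 (x i) * e1 * i1 (y i)).
  by rewrite one1 (g_iota1 H2) mulr1.
rewrite (g_iota_sum H2) mulr_sumr scaler_sumr.
apply: eq_bigr => i _.
rewrite !i2M !mulrA (BcP Hb) -!mulrA (mulrA b) (Kb Hb).
by rewrite -scalerAl -scalerAr !mulrA.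
Qed.

Ltac ks := repeat first [ exact: klin_id
  | apply: (klin_comp (klin_mull _)) | apply: (klin_comp (klin_mulr _))
  | apply: (klin_comp (g_iota_klin H1)) | apply: (klin_comp (g_iota_klin H2))
  | apply: (klin_comp (g_ER_klin H1)) | apply: (klin_comp (g_ER_klin H2))
  | apply: (klin_comp (g_ES_klin H1)) ].

Lemma klin_sum2 (V : lmodType k) (f : M -> M -> V) (I : Type) (rr : seq I) (P : pred I) (F : I -> M) v :
  (forall v, klin (fun u => f u v)) -> f (\sum_(i <- rr | P i) F i) v = \sum_(i <- rr | P i) f (F i) v.
Proof. by move=> Hl; exact: (klin_sum _ _ _ (Hl v)). Qed.

Lemma casimir (V : lmodType k) (f : M -> M -> V) :
  (forall v, klin (fun u => f u v)) -> (forall u, klin (f u)) ->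
  (forall u m v, N m -> f (u * m) v = f u (m * v)) ->
  forall m, \sum_(i < n) f (m * x i) (y i) = \sum_(i < n) f (x i) (y i * m).
Proof.
move=> Hl Hr Hb m.
transitivity (\sum_(i < n) \sum_(k < n) f (x k) (E (y k * (m * x i)) * y i)).
  apply: eq_bigr => i _; rewrite -{1}[m * x i]qb2 klin_sum2 //.
  by apply: eq_bigr => kk _; apply: Hb.
rewrite exchange_big; apply: eq_bigr => kk _ /=.
rewrite -(klin_sum _ _ _ (Hr _)); congr f.
by rewrite -[RHS]qb1; apply: eq_bigr => i _; rewrite mulrA.
Qed.

Lemma Bform_B a : Acen a -> Bc (Bform a).
Proof.
move=> Ha _ [m ->]; rewrite /Bform -scalerAl -scalerAr; congr (_ *: _).
rewrite mulr_suml mulr_sumr.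
pose f u v := i2 (i1 u) * i2 a * e2 * i2 e1 * i2 (i1 v).
have -> : \sum_(i < n) i2 (i1 (x i)) * i2 a * e2 * i2 e1 * i2 (i1 (y i)) * i2 (i1 m)
   = \sum_(i < n) f (x i) (y i * m).
  by apply: eq_bigr => i _; rewrite /f !i1M !i2M !mulrA.
have -> : \sum_(i < n) i2 (i1 m) * (i2 (i1 (x i)) * i2 a * e2 * i2 e1 * i2 (i1 (y i)))
   = \sum_(i < n) f (m * x i) (y i).
  by apply: eq_bigr => i _; rewrite /f !i1M !i2M !mulrA.
symmetry; apply: casimir.
- by move=> v; rewrite /f; ks.
- by move=> u; rewrite /f; ks.
move=> u m' v Hm; rewrite /f !i1M !i2M !mulrA.
rewrite -(mulrA (i2 (i1 u))) (j_A Ha Hm) mulrA.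
rewrite -(mulrA _ (i2 (i1 m')) e2) j_e2 mulrA.
by rewrite -(mulrA _ (i2 (i1 m')) (i2 e1)) (j_e1 Hm) mulrA.
Qed.

Lemma beta_Bform a : Acen a -> beta (Bform a) = a.
Proof.
move=> Ha; rewrite betaE /Bform -!scalerAl mulr_suml mulr_suml.
have term : forall i, i2 (i1 (x i)) * i2 a * e2 * i2 e1 * i2 (i1 (y i)) * i2 e1 * e2
    = lam *: (i2 (i1 (x i * E (y i)) * a) * e2).
  move=> i.
  have h : e2 * i2 (e1 * i1 (y i) * e1) * e2 = lam *: (i2 (i1 (E (y i))) * e2).
    by rewrite e2e2 e1e1 EM_ie i1Z i2Z -scalerAl.
  transitivity (i2 (i1 (x i)) * i2 a * (e2 * i2 (e1 * i1 (y i) * e1) * e2)).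
    by rewrite !i2M !mulrA.
  rewrite h -scalerAr; congr (_ *: _).
  rewrite i1M !i2M !mulrA -(mulrA (i2 (i1 (x i))) (i2 (i1 (E (y i))))).
  by rewrite (j_A Ha (EN _)) mulrA.
rewrite (eq_bigr _ (fun i _ => term i)) -scaler_sumr -mulr_suml -(g_iota_sum H2).
rewrite -mulr_suml -(g_iota_sum H1).
have -> : \sum_(i < n) x i * E (y i) = 1.
  by rewrite -[RHS](qb2 1); apply: eq_bigr => i _; rewrite mulr1.
rewrite (g_iota1 H1) mul1r !EM1Z EM1_ie !scalerA.
by rewrite mulVf // mulr1 mulVf // scale1r.
Qed.

Fact theta_key : unit. Proof. exact: tt. Qed.
Definition theta (a : M1) := locked_with theta_key
  (lam^-1 *: \sum_(i < n) i1 (EM (e1 * i1 (x i) * a)) * e1 * i1 (y i)).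
Lemma thetaE a : theta a =
  lam^-1 *: \sum_(i < n) i1 (EM (e1 * i1 (x i) * a)) * e1 * i1 (y i).
Proof. by rewrite /theta unlock. Qed.

Lemma e2e1B b : Bc b -> EM1 (e2 * i2 e1 * b) = lam *: theta (beta b).
Proof.
move=> Hb; rewrite {1}(B_recon Hb) /Bform -scalerAr mulr_sumr EM1Z.
rewrite (klin_sum _ _ _ (g_ER_klin H2)).
have term : forall i, e2 * i2 e1 * (i2 (i1 (x i)) * i2 (beta b) * e2 * i2 e1 * i2 (i1 (y i)))
   = i2 (i1 (EM (e1 * i1 (x i) * beta b))) * e2 * i2 (e1 * i1 (y i)).
  by move=> i; rewrite -e2e2 !i2M !mulrA.
under eq_bigr do rewrite term EM1_iei.
rewrite thetaE -scaler_sumr scalerA mulVf // scale1r scalerA mulfV // scale1r.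
by apply: eq_bigr => i _; rewrite mulrA.
Qed.

Lemma theta_act a v : Acen a ->
  theta a * i1 v * e1 = lam^-1 *: (i1 (EM (e1 * i1 v * a)) * e1).
Proof.
move=> Ha; rewrite thetaE -!scalerAl; congr (_ *: _).
rewrite 2!mulr_suml.
have term : forall i, i1 (EM (e1 * i1 (x i) * a)) * e1 * i1 (y i) * i1 v * e1
   = i1 (EM (e1 * i1 (x i * E (y i * v)) * a)) * e1.
  move=> i; rewrite -!mulrA (mulrA (i1 (y i))) -i1M.
  rewrite (mulrA e1 (i1 (y i * v))) e1e1 mulrA -i1M; congr (i1 _ * _).
  by rewrite -EM_r -!mulrA (Ha _ (EN _)) i1M !mulrA.
rewrite (eq_bigr _ (fun i _ => term i)).
transitivity (i1 (EM (e1 * i1 (\sum_(i < n) x i * E (y i * v)) * a)) * e1); last by rewrite qb2.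
rewrite (g_iota_sum H1) mulr_sumr mulr_suml (klin_sum _ _ _ (g_ER_klin H1)).
by rewrite (g_iota_sum H1) mulr_suml.
Qed.

Lemma theta_inj a1 a2 : Acen a1 -> Acen a2 -> theta a1 = theta a2 -> a1 = a2.
Proof.
move=> Ha1 Ha2 Heq.
have s1 : forall v, EM (e1 * i1 v * a1) = EM (e1 * i1 v * a2).
  move=> v; have := congr1 (fun z => EM (z * i1 v * e1)) Heq => /=.
  rewrite !theta_act // !EMZ !EM_ie !scalerA mulVf // !scale1r.
  by [].
have s2 : forall w, EM (e1 * w * a1) = EM (e1 * w * a2).
  apply: (g_ext H1); try by ks.
  move=> u v; rewrite (g_mul H1) !mul1r (g_tau_e H1) -!mulrA !EM_l !mulrA.
  by rewrite s1.
have s3 : forall w, EM (w * a1) = EM (w * a2).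
  move=> w; rewrite -[w]mul1r -one1 !mulr_suml !(klin_sum _ _ _ (g_ER_klin H1)).
  apply: eq_bigr => i _; rewrite -!mulrA !EM_l !mulrA.
  by rewrite -(mulrA e1) s2 mulrA.
rewrite -[a1](g_qbE2 H1) -[a2](g_qbE2 H1).
by apply: eq_bigr => i _; rewrite s3.
Qed.

Lemma theta_A a : Acen a -> Acen (theta a).
Proof.
move=> Ha m Hm; rewrite thetaE -scalerAl -scalerAr; congr (_ *: _).
rewrite mulr_suml mulr_sumr.
pose f u v := i1 (EM (e1 * i1 u * a)) * e1 * i1 v.
have -> : \sum_(i < n) i1 (EM (e1 * i1 (x i) * a)) * e1 * i1 (y i) * i1 m
   = \sum_(i < n) f (x i) (y i * m).
  by apply: eq_bigr => i _; rewrite /f i1M mulrA.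
have -> : \sum_(i < n) i1 m * (i1 (EM (e1 * i1 (x i) * a)) * e1 * i1 (y i))
   = \sum_(i < n) f (m * x i) (y i).
  apply: eq_bigr => i _; rewrite /f !mulrA -i1M -EM_l !mulrA (i1_e1 Hm).
  by rewrite -(mulrA e1) -i1M.
symmetry; apply: casimir.
- by move=> v; rewrite /f; ks.
- by move=> u; rewrite /f; ks.
move=> u m' v Hm'; rewrite /f !i1M !mulrA -(mulrA _ (i1 m') a) -(Ha _ Hm') mulrA.
by rewrite EM_r i1M -(mulrA _ (i1 m') e1) (i1_e1 Hm') !mulrA.
Qed.

Variable S : M2 -> M2.
Hypothesis SB : forall b, Bc b -> Bc (S b).
Hypothesis Sdef : forall b, Bc b ->
     EM1 (b * i2 e1 * e2) = EM1 (e2 * i2 e1 * S b).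

Lemma EM1_beta b : EM1 (b * i2 e1 * e2) = lam *: beta b.
Proof. by rewrite betaE scalerA mulfV // scale1r. Qed.

Lemma S_theta b : Bc b -> beta b = theta (beta (S b)).
Proof.
move=> Hb; have h := Sdef Hb.
rewrite EM1_beta (e2e1B (SB Hb)) in h.
exact: (scalerI lam0 h).
Qed.

Lemma theta_EM a v : Acen a -> EM (theta a * i1 v * e1) = EM (e1 * i1 v * a).
Proof.
move=> Ha; rewrite theta_act // EMZ EM_ie scalerA mulVf // scale1r.
by [].
Qed.

Lemma trace w : E (EM (e1 * w)) = E (EM (w * e1)).
Proof.
move: w; apply: (g_ext H1); try by ks.
move=> a b; rewrite !(g_mul H1) !(g_ER_tau H1) !EklinZ !mul1r !mulr1.
by rewrite Ebil ?EN // Ebir ?EN.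
Qed.

Lemma transp b u v : Acen b ->
  E (u * EM (e1 * i1 v * b)) = E (EM (theta (theta b) * i1 u * e1) * v).
Proof.
move=> Hb; have Hg := theta_A Hb.
rewrite -(theta_EM v Hb) (theta_EM u Hg) -EM_l -EM_r !mulrA.
by rewrite -trace !mulrA.
Qed.

Lemma inner b q0 a' : Acen b ->
  EM (theta (theta b) * i1 q0 * a') =
  \sum_(i < n) E (q0 * EM (a' * i1 (x i) * b)) * y i.
Proof.
move=> Hb; move: a'; apply: (g_ext H1).
- by ks.
- by apply: klin_sumf => i; ks.
move=> p' q'.
rewrite -(mulrA _ (i1 q0)) (g_iota_tau H1) (g_tau_e H1 (q0 * p') q') !mulrA EM_r.
transitivity (\sum_(i < n) E (EM (theta (theta b) * i1 (q0 * p') * e1) * q' * x i) * y i).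
  by rewrite qb1.
apply: eq_bigr => i _.
rewrite (g_tau_iota H1) (g_tau_e H1 p' (q' * x i)) -!mulrA EM_l !mulrA.
by rewrite -(mulrA (EM _) q') -transp.
Qed.

Definition F (z : M2) := EM (EM1 z).

Lemma Bform_mul_r a t : Bform a * t =
  lam^-1 *: \sum_(i < n) (i2 (i1 (x i)) * i2 a * e2 * i2 e1 * i2 (i1 (y i))) * t.
Proof. by rewrite /Bform -scalerAl mulr_suml. Qed.

Lemma Bform_mul_l a t : t * Bform a =
  lam^-1 *: \sum_(i < n) t * (i2 (i1 (x i)) * i2 a * e2 * i2 e1 * i2 (i1 (y i))).
Proof. by rewrite /Bform -scalerAr mulr_sumr. Qed.

Lemma core b a a' : Acen b ->
  F (Bform (theta (theta b)) * (i2 a * e2 * i2 a')) = F ((i2 a * e2 * i2 a') * Bform b).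
Proof.
move=> Hb; set b0 := theta (theta b).
have Hb0 : Acen b0 by apply: theta_A; apply: theta_A.
rewrite /F Bform_mul_r Bform_mul_l !EM1Z.
rewrite !(klin_sum _ _ _ (g_ER_klin H2)).
have tL : forall i, i2 (i1 (x i)) * i2 b0 * e2 * i2 e1 * i2 (i1 (y i)) * (i2 a * e2 * i2 a')
   = i2 (i1 (x i) * b0 * i1 (EM (e1 * i1 (y i) * a))) * e2 * i2 a'.
  move=> i; transitivity (i2 (i1 (x i) * b0) * (e2 * i2 (e1 * i1 (y i) * a) * e2) * i2 a').
    by rewrite !i2M !mulrA.
  by rewrite e2e2 !i2M !mulrA.
have tR : forall i, i2 a * e2 * i2 a' * (i2 (i1 (x i)) * i2 b * e2 * i2 e1 * i2 (i1 (y i)))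
   = i2 (a * i1 (EM (a' * i1 (x i) * b))) * e2 * i2 (e1 * i1 (y i)).
  move=> i; transitivity (i2 a * (e2 * i2 (a' * i1 (x i) * b) * e2) * i2 (e1 * i1 (y i))).
    by rewrite !i2M !mulrA.
  by rewrite e2e2 !i2M !mulrA.
under eq_bigr do rewrite tL EM1_iei.
under [in RHS]eq_bigr do rewrite tR EM1_iei.
rewrite !EMZ !(klin_sum _ _ _ (g_ER_klin H1)); congr (_ *: _).
under eq_bigr do rewrite EMZ.
under [in RHS]eq_bigr do rewrite EMZ.
rewrite -!scaler_sumr; congr (_ *: _).
have L1 : forall p q, \sum_(i < n) EM (i1 (x i) * b0 * i1 (EM (e1 * i1 (y i) * tau1 p q)) * a')
   = lam *: (p * EM (b0 * i1 q * a')).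
  move=> p q.
  under eq_bigr do rewrite -(mulrA e1) (g_iota_tau H1) (g_mul H1) !mul1r (g_ER_tau H1)
     i1Z i1M -!scalerAr -!scalerAl EMZ !mulrA -(mulrA (i1 (x _)) b0) (Hb0 _ (EN _)) mulrA
     -i1M -!mulrA EM_l.
  by rewrite -scaler_sumr -mulr_suml qb2 !mulrA.
have L2 : forall p q, \sum_(i < n) EM (tau1 p q * i1 (EM (a' * i1 (x i) * b)) * (e1 * i1 (y i)))
   = lam *: (p * \sum_(i < n) E (q * EM (a' * i1 (x i) * b)) * y i).
  move=> p q; rewrite mulr_sumr scaler_sumr; apply: eq_bigr => i _.
  rewrite (g_tau_iota H1) mulrA (g_mul H1) mulr1 (g_tau_iota H1) mul1r (g_ER_tau H1).
  by rewrite !mulrA.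
clear tL tR; move: a; apply: (g_ext H1).
- by apply: klin_sumf => i; ks.
- by apply: klin_sumf => i; ks.
move=> p q; rewrite L1 L2; congr (_ *: (_ * _)).
exact: inner.
Qed.

Hypothesis depthA : exists (m : nat) (a : 'I_m -> M1),
     (forall j, centralizer (fun z : M1 => exists u, N u /\ z = i1 u) (a j)) /\
     (forall z : M1, exists c : 'I_m -> M,
        z = \sum_(j < m) a j * i1 (c j)) /\
     (forall c : 'I_m -> M,
        \sum_(j < m) a j * i1 (c j) = 0 -> forall j, c j = 0).

Lemma EM_sum (mm : nat) (d : M1) (G : 'I_mm -> M1) :
  EM (d * \sum_(j < mm) G j) = \sum_(j < mm) EM (d * G j).
Proof. by rewrite mulr_sumr (klin_sum _ _ _ (g_ER_klin H1)). Qed.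

Lemma EM1_sum (mm : nat) (d : M2) (G : 'I_mm -> M1) :
  EM1 (d * i2 (\sum_(j < mm) G j) * e2) = \sum_(j < mm) EM1 (d * i2 (G j) * e2).
Proof.
by rewrite (g_iota_sum H2) mulr_sumr mulr_suml (klin_sum _ _ _ (g_ER_klin H2)).
Qed.

Lemma faith d1 d2 :
  (forall a a', Acen a -> Acen a' ->
     F (d1 * (i2 a * e2 * i2 a')) = F (d2 * (i2 a * e2 * i2 a'))) -> d1 = d2.
Proof.
move=> Hd; case: depthA => mm [aa [HA [Hspan _]]].
have HA' : forall j, Acen (aa j) by move=> j; apply/AcenP.
have st1 : forall a, Acen a -> EM1 (d1 * i2 a * e2) = EM1 (d2 * i2 a * e2).
  move=> a Ha.
  have h : forall w, EM (EM1 (d1 * i2 a * e2) * w) = EM (EM1 (d2 * i2 a * e2) * w).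
    move=> w; have [c ->] := Hspan w; rewrite !EM_sum; apply: eq_bigr => j _.
    rewrite !mulrA !EM_r; congr (_ * _).
    by have := Hd a (aa j) Ha (HA' j); rewrite /F !mulrA !EM1_r.
  rewrite -[EM1 (d1 * _ * _)](g_qbE1 H1) -[EM1 (d2 * _ * _)](g_qbE1 H1).
  by apply: eq_bigr => i _; rewrite h.
have st2 : forall w, EM1 (d1 * i2 w * e2) = EM1 (d2 * i2 w * e2).
  move=> w; have [c ->] := Hspan w; rewrite !EM1_sum; apply: eq_bigr => j _.
  rewrite !i2M !mulrA -!(mulrA _ (i2 (i1 (c j))) e2) j_e2 !mulrA !EM1_r.
  by rewrite st1.
rewrite -[d1](g_qbE1 H2) -[d2](g_qbE1 H2); apply: eq_bigr => i _ /=.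
by rewrite (tau2_1 (lam^-1 *: _)) !mulrA st2.
Qed.

Variable q : M2 -> M2.
Hypothesis qNak : forall c c', Cc c -> Cc c' -> EM (EM1 (q c * c')) = EM (EM1 (c' * c)).

Lemma q_B b : Bc b -> q b = Bform (theta (theta (beta b))).
Proof.
move=> Hb; apply: faith => a a' Ha Ha'.
have Ct : Cc (i2 a * e2 * i2 a').
  move=> _ [m [Hm ->]].
  rewrite -!mulrA -(j_A Ha' Hm) (mulrA e2) -j_e2 -mulrA (mulrA (i2 a)) -(j_A Ha Hm).
  by rewrite !mulrA.
rewrite /F (qNak (Bc_Cc Hb) Ct) {1}(B_recon Hb).
by have := core a a' (beta_A Hb); rewrite /F => ->.
Qed.

Lemma main_res b : Bc b -> S (S (q b)) = b /\ q (S (S b)) = b.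
Proof.
move=> Hb.
have Hbe := beta_A Hb.
have Hg := theta_A Hbe.
have Hb0 := theta_A Hg.
split.
  rewrite (q_B Hb).
  have HB0 := Bform_B Hb0.
  have HS0 := SB HB0.
  have HSS0 := SB HS0.
  have e0 := beta_Bform Hb0.
  have t1 := S_theta HB0.
  rewrite e0 in t1.
  have u1 := theta_inj (beta_A HS0) Hg (esym t1).
  have t2 := S_theta HS0.
  rewrite u1 in t2.
  have u2 := theta_inj Hbe (beta_A HSS0) t2.
  by rewrite (B_recon HSS0) -u2 -(B_recon Hb).
have HS := SB Hb.
have HSS := SB HS.
rewrite (q_B HSS) -(S_theta HS) -(S_theta Hb).
by rewrite -(B_recon Hb).
Qed.

End Main.


Theorem proposition4p10
  (k : fieldType) (M : algType k) (N : M -> Prop)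
  (* N is a k-subalgebra of M *)
  (N1 : N 1)
  (Nlin : forall (c : k) (u v : M), N u -> N v -> N (c *: u + v))
  (Nmul : forall u v : M, N u -> N v -> N (u * v))
  (* irreducible: C_M(N) = k1 *)
  (irr : forall m : M, centralizer N m -> exists c : k, m = c%:A)
  (* E : M -> N an N-bimodule map *)
  (E : M -> M)
  (EN : forall m, N (E m))
  (Eadd : forall u v, E (u + v) = E u + E v)
  (Ebil : forall u m, N u -> E (u * m) = u * E m)
  (Ebir : forall u m, N u -> E (m * u) = E m * u)
  (* quasi-basis, normalized *)
  (n : nat) (x y : 'I_n -> M) (lam : k)
  (qb1 : forall m, \sum_(i < n) E (m * x i) * y i = m)
  (qb2 : forall m, \sum_(i < n) x i * E (y i * m) = m)
  (E1 : E 1 = 1)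
  (lam0 : lam != 0)
  (sumxy : \sum_(i < n) x i * y i = lam^-1%:A)
  (* first basic construction N c M c M1 *)
  (M1 : algType k) (tau1 : M -> M -> M1) (EM : M1 -> M)
  (bc1 : is_basic_construction N E x y lam tau1 EM)
  (* second basic construction M c M1 c M2 *)
  (M2 : algType k) (tau2 : M1 -> M1 -> M2) (EM1 : M2 -> M1)
  (bc2 : is_basic_construction
           (fun z : M1 => exists m : M, z = bc_incl x y tau1 m)
           (fun z : M1 => bc_incl x y tau1 (EM z))
           (fun i => tau1 (lam^-1 *: x i) 1) (fun i => tau1 1 (y i))
           lam tau2 EM1)
  (* depth 2: M1 free as right M-module with a (finite) basis in A = C_M1(N) *)
  (depthA : exists (m : nat) (a : 'I_m -> M1),
     (forall j, centralizer (fun z : M1 => exists u, N u /\ z = bc_incl x y tau1 u) (a j)) /\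
     (forall z : M1, exists c : 'I_m -> M,
        z = \sum_(j < m) a j * bc_incl x y tau1 (c j)) /\
     (forall c : 'I_m -> M,
        \sum_(j < m) a j * bc_incl x y tau1 (c j) = 0 -> forall j, c j = 0))
  (* depth 2: M2 free as right M1-module with a (finite) basis in B = C_M2(M) *)
  (depthB : exists (m : nat) (b : 'I_m -> M2),
     (forall j, centralizer (fun z : M2 => exists u : M,
          z = bc_incl (fun i => tau1 (lam^-1 *: x i) 1) (fun i => tau1 1 (y i)) tau2
                (bc_incl x y tau1 u)) (b j)) /\
     (forall z : M2, exists c : 'I_m -> M1,
        z = \sum_(j < m) b j * bc_incl (fun i => tau1 (lam^-1 *: x i) 1)
                                       (fun i => tau1 1 (y i)) tau2 (c j)) /\
     (forall c : 'I_m -> M1,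
        \sum_(j < m) b j * bc_incl (fun i => tau1 (lam^-1 *: x i) 1)
                                   (fun i => tau1 1 (y i)) tau2 (c j) = 0 ->
        forall j, c j = 0))
  (* Nakayama automorphism q of F = E_M o E_M1 on C = C_M2(N) *)
  (q : M2 -> M2)
  (qC : forall c, centralizer (fun z : M2 => exists u, N u /\
          z = bc_incl (fun i => tau1 (lam^-1 *: x i) 1) (fun i => tau1 1 (y i)) tau2
                (bc_incl x y tau1 u)) c ->
        centralizer (fun z : M2 => exists u, N u /\
          z = bc_incl (fun i => tau1 (lam^-1 *: x i) 1) (fun i => tau1 1 (y i)) tau2
                (bc_incl x y tau1 u)) (q c))
  (qNak : forall c c',
     centralizer (fun z : M2 => exists u, N u /\
          z = bc_incl (fun i => tau1 (lam^-1 *: x i) 1) (fun i => tau1 1 (y i)) tau2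
                (bc_incl x y tau1 u)) c ->
     centralizer (fun z : M2 => exists u, N u /\
          z = bc_incl (fun i => tau1 (lam^-1 *: x i) 1) (fun i => tau1 1 (y i)) tau2
                (bc_incl x y tau1 u)) c' ->
     EM (EM1 (q c * c')) = EM (EM1 (c' * c)))
  (* antipode S : B -> B *)
  (S : M2 -> M2)
  (SB : forall b, centralizer (fun z : M2 => exists u : M,
          z = bc_incl (fun i => tau1 (lam^-1 *: x i) 1) (fun i => tau1 1 (y i)) tau2
                (bc_incl x y tau1 u)) b ->
        centralizer (fun z : M2 => exists u : M,
          z = bc_incl (fun i => tau1 (lam^-1 *: x i) 1) (fun i => tau1 1 (y i)) tau2
                (bc_incl x y tau1 u)) (S b))
  (Sdef : forall b, centralizer (fun z : M2 => exists u : M,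
          z = bc_incl (fun i => tau1 (lam^-1 *: x i) 1) (fun i => tau1 1 (y i)) tau2
                (bc_incl x y tau1 u)) b ->
     EM1 (b * bc_incl (fun i => tau1 (lam^-1 *: x i) 1) (fun i => tau1 1 (y i)) tau2
                 (tau1 1 1) * tau2 1 1)
     = EM1 (tau2 1 1 * bc_incl (fun i => tau1 (lam^-1 *: x i) 1) (fun i => tau1 1 (y i)) tau2
                 (tau1 1 1) * S b)) :
  forall b, centralizer (fun z : M2 => exists u : M,
          z = bc_incl (fun i => tau1 (lam^-1 *: x i) 1) (fun i => tau1 1 (y i)) tau2
                (bc_incl x y tau1 u)) b ->
    S (S (q b)) = b /\ q (S (S b)) = b.
Proof.
move=> b Hb.
exact: (main_res N1 Nlin EN Eadd Ebil Ebir qb1 qb2 E1 lam0 sumxy bc1 bc2 SB Sdef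
  depthA qNak Hb).
Qed.
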